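(* Let $\mathcal{F}$ be a class of real functions on $\mathcal{X}$ and $(\mathbf{X}_i,Y_i)_{i=1}^n$ a sample. Let $\widehat g_1,\dots,\widehat g_d$ be $\Delta_1$-empirical risk minimizers in $\mathcal{F}$, and let $\widetilde f$ be an exact empirical risk minimizer over $Star_d(\mathcal{F},\widehat g_1,\dots,\widehat g_d)$. Then for every $h\in\mathcal{F}$, $$\widehat{\mathbb{E}}(h-Y)^2-\widehat{\mathbb{E}}(\widetilde f-Y)^2\ge \frac1{18}\,\widehat{\mathbb{E}}(\widetilde f-h)^2-2\Delta_1.$$
   Context: $\widehat{\mathbb{E}}(f)=\frac1n\sum_{i=1}^n f(\mathbf{X}_i)$ (and $\widehat{\mathbb{E}}(f-Y)^2=\frac1n\sum_i(f(\mathbf{X}_i)-Y_i)^2$). $\widehat g\in\mathcal{G}$ is a $\Delta$-empirical risk minimizer in $\mathcal{G}$ if $\widehat{\mathbb{E}}(\widehat g-Y)^2\le\min_{f\in\mathcal{G}}\widehat{\mathbb{E}}(f-Y)^2+\Delta$. $Star_d(\mathcal{F},\widehat g_1,\dots,\widehat g_d)=\{\sum_{i=1}^d\lambda_i\widehat g_i+(1-\sum_i\lambda_i)f:\lambda_i\in[0,1],\ 1-\sum_i\lambda_i\in[0,1],\ f\in\mathcal{F}\}$. *)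

(* Defs.v *)
From mathcomp Require Import all_boot all_order all_algebra.
Set Implicit Arguments. Unset Strict Implicit. Unset Printing Implicit Defensive.
Import Order.TTheory GRing.Theory Num.Theory.
Local Open Scope ring_scope.

Definition emp_mean (R : realFieldType) (n : nat) (v : 'I_n -> R) : R :=
  n%:R^-1 * \sum_(i < n) v i.

Definition emp_risk (R : realFieldType) (T : Type) (n : nat)
  (Xs : 'I_n -> T) (Ys : 'I_n -> R) (f : T -> R) : R :=
  emp_mean (fun i => (f (Xs i) - Ys i) ^+ 2).

Definition emp_dist (R : realFieldType) (T : Type) (n : nat)
  (Xs : 'I_n -> T) (f g : T -> R) : R :=
  emp_mean (fun i => (f (Xs i) - g (Xs i)) ^+ 2).

Definition is_Delta_ERM (R : realFieldType) (T : Type) (n : nat)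
  (Xs : 'I_n -> T) (Ys : 'I_n -> R) (G : (T -> R) -> Prop) (Delta : R)
  (g : T -> R) : Prop :=
  G g /\ forall f, G f -> emp_risk Xs Ys g <= emp_risk Xs Ys f + Delta.

Definition Star (R : realFieldType) (T : Type) (d : nat)
  (F : (T -> R) -> Prop) (g : 'I_d -> T -> R) : (T -> R) -> Prop :=
  fun u => exists (lam : 'I_d -> R) (f : T -> R),
    [/\ forall i, 0 <= lam i <= 1,
        0 <= 1 - \sum_(i < d) lam i <= 1,
        F f &
        u = (fun x => \sum_(i < d) lam i * g i x + (1 - \sum_(i < d) lam i) * f x)].

(* Main.v *)
Require Import Defs.
From mathcomp Require Import all_boot all_order all_algebra.
From mathcomp Require Import ring lra.
Import Order.TTheory GRing.Theory Num.Theory.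
Local Open Scope ring_scope.

Section H.
Variable R : realFieldType.

Lemma em_ext n (u v : 'I_n -> R) : (forall i, u i = v i) -> emp_mean u = emp_mean v.
Proof. by move=> e; rewrite /emp_mean; congr (_ * _); apply: eq_bigr => i _; apply: e. Qed.

Lemma em_lin3 n (a b c : R) (u v w : 'I_n -> R) :
  emp_mean (fun i => a * u i + b * v i + c * w i) =
  a * emp_mean u + b * emp_mean v + c * emp_mean w.
Proof. rewrite /emp_mean !big_split /= -!mulr_sumr; ring. Qed.

Lemma em_le n (u v : 'I_n -> R) : (forall i, u i <= v i) -> emp_mean u <= emp_mean v.
Proof.
move=> e; rewrite /emp_mean; apply: ler_wpM2l; first by rewrite invr_ge0 ler0n.
by apply: ler_sum => i _; apply: e.
Qed.

Lemma em_ge0 n (u : 'I_n -> R) : (forall i, 0 <= u i) -> 0 <= emp_mean u.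
Proof.
move=> e; rewrite /emp_mean; apply: mulr_ge0; first by rewrite invr_ge0 ler0n.
by apply: sumr_ge0 => i _; apply: e.
Qed.

Lemma sum_if1 d (j0 : 'I_d) (c : 'I_d -> R) :
  \sum_(i < d) (if i == j0 then c i else 0) = c j0.
Proof. by rewrite -big_mkcond big_pred1_eq. Qed.

Lemma mid_id (a b y : R) :
  ((a + b) / 2 - y) ^+ 2 = 2^-1 * (a - y) ^+ 2 + 2^-1 * (b - y) ^+ 2 + (- 4^-1) * (a - b) ^+ 2.
Proof. by field. Qed.

Lemma sq_tri (a b c : R) :
  (a - c) ^+ 2 <= 2 * (a - b) ^+ 2 + 2 * (b - c) ^+ 2 + 0 * (b - c) ^+ 2.
Proof.
have -> : 2 * (a - b) ^+ 2 + 2 * (b - c) ^+ 2 + 0 * (b - c) ^+ 2 = (a - c) ^+ 2 + (a - 2 * b + c) ^+ 2 by ring.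
by rewrite lerDl sqr_ge0.
Qed.

Lemma final (A B E P Q Rr D : R) :
  0 <= D -> B <= E + D ->
  A <= 2^-1 * B + 2^-1 * E + (- 4^-1) * P ->
  A <= 2^-1 * A + 2^-1 * B + (- 4^-1) * Q ->
  Rr <= 2 * Q + 2 * P + 0 * P -> 0 <= P -> 0 <= Q -> 0 <= Rr ->
  E - A >= 18%:R^-1 * Rr - 2%:R * D.
Proof. move=> *; lra. Qed.

End H.

Theorem lemma1 (R : realFieldType) (T : Type) (F : (T -> R) -> Prop)
  (n : nat) (Xs : 'I_n -> T) (Ys : 'I_n -> R)
  (d : nat) (hd : (0 < d)%N) (g : 'I_d -> T -> R) (Delta1 : R) (ft : T -> R) :
  (forall i, is_Delta_ERM Xs Ys F Delta1 (g i)) ->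
  is_Delta_ERM Xs Ys (Star F g) 0 ft ->
  forall h, F h ->
    emp_risk Xs Ys h - emp_risk Xs Ys ft >= 18%:R^-1 * emp_dist Xs ft h - 2%:R * Delta1.
Proof.
move=> Hg [[lam [f0 [Hlam Hmu Hf0 Eft]]] Hft] h Fh.
set j0 := Ordinal hd.
have [Fg Hgm] := Hg j0.
have D0 : 0 <= Delta1.
  by have := Hgm _ Fg; rewrite -{1}[emp_risk _ _ (g j0)]addr0 lerD2l.
have H3 := Hgm _ Fh.
set gg := g j0.
(* H1: midpoint of g and h *)
pose l1 := fun i : 'I_d => if i == j0 then (2^-1 : R) else 0.
have S1 : \sum_(i < d) l1 i = 2^-1 by rewrite /l1 (@sum_if1 R d j0 (fun=> 2^-1)).
have H1 := Hft (fun x => \sum_(i < d) l1 i * g i x + (1 - \sum_(i < d) l1 i) * h x).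
have H1' : emp_risk Xs Ys ft <= 2^-1 * emp_risk Xs Ys gg + 2^-1 * emp_risk Xs Ys h
      + (- 4^-1) * emp_dist Xs gg h.
  rewrite addr0 in H1; apply: le_trans (H1 _) _.
    exists l1, h; split => //.
    - move=> i; rewrite /l1; case: (i == j0); apply/andP; split; lra.
    - by rewrite S1; apply/andP; split; lra.
  rewrite /emp_risk /emp_dist -em_lin3; rewrite le_eqVlt; apply/orP; left; apply/eqP; apply: em_ext => i.
  rewrite S1 -mid_id; congr (_ ^+ 2); congr (_ - _).
  have -> : \sum_(i0 < d) l1 i0 * g i0 (Xs i) = \sum_(i0 < d) (if i0 == j0 then 2^-1 * g i0 (Xs i) else 0).
    by apply: eq_bigr => k _; rewrite /l1; case: (k == j0); rewrite ?mul0r.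
  rewrite (@sum_if1 R d j0 (fun k => 2^-1 * g k (Xs i))) /gg; by field.
(* H2: midpoint of ft and g *)
pose l2 := fun i : 'I_d => lam i / 2 + l1 i.
have S2 : \sum_(i < d) l2 i = (\sum_(i < d) lam i) / 2 + 2^-1.
  by rewrite /l2 big_split /= S1 -mulr_suml.
have H2 := Hft (fun x => \sum_(i < d) l2 i * g i x + (1 - \sum_(i < d) l2 i) * f0 x).
have H2' : emp_risk Xs Ys ft <= 2^-1 * emp_risk Xs Ys ft + 2^-1 * emp_risk Xs Ys gg
      + (- 4^-1) * emp_dist Xs ft gg.
  rewrite addr0 in H2; apply: le_trans (H2 _) _.
    exists l2, f0; split => //.
    - move=> i; have := Hlam i; rewrite /l2 /l1; case: (i == j0) => /andP[a b]; apply/andP; split; lra.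
    - by rewrite S2; move: Hmu => /andP[a b]; apply/andP; split; lra.
  rewrite /emp_risk /emp_dist -em_lin3; rewrite le_eqVlt; apply/orP; left; apply/eqP; apply: em_ext => i.
  rewrite S2 -mid_id; congr (_ ^+ 2); congr (_ - _).
  have -> : \sum_(i0 < d) l2 i0 * g i0 (Xs i) = (\sum_(i0 < d) lam i0 * g i0 (Xs i)) / 2 +
      \sum_(i0 < d) (if i0 == j0 then 2^-1 * g i0 (Xs i) else 0).
    rewrite mulr_suml -big_split /=; apply: eq_bigr => k _; rewrite /l2 /l1.
    by case: (k == j0); ring.
  rewrite (@sum_if1 R d j0 (fun k => 2^-1 * g k (Xs i))) /gg Eft; by field.
have H4 : emp_dist Xs ft h <= 2 * emp_dist Xs ft gg + 2 * emp_dist Xs gg h + 0 * emp_dist Xs gg h.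
  rewrite /emp_dist -em_lin3; apply: em_le => i; apply: sq_tri.
have P1 : 0 <= emp_dist Xs gg h by apply: em_ge0 => i; apply: sqr_ge0.
have P2 : 0 <= emp_dist Xs ft gg by apply: em_ge0 => i; apply: sqr_ge0.
have P3 : 0 <= emp_dist Xs ft h by apply: em_ge0 => i; apply: sqr_ge0.
exact: final D0 H3 H1' H2' H4 P1 P2 P3.
Qed.
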